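(* Let $(M,ds^2)$ be an $n$-dimensional Riemannian manifold, $1\le p\le n$. For every $x\in M$ and every $p$-form $g$ at $x$, $$p(n-p)\lambda_{\mathfrak R}(x)|g|^2\le\sum_{i_1<\cdots<i_p}\langle\mathfrak R\xi^g_{i_1\cdots i_p},\xi^g_{i_1\cdots i_p}\rangle\le p(n-p)\Lambda_{\mathfrak R}(x)|g|^2.$$
   Context: Local orthonormal frame $e_i$ with dual coframe $\omega^i$, summation convention; $g=\sum_{i_1<\dots<i_p}g_{i_1\cdots i_p}\omega^{i_1}\wedge\dots\wedge\omega^{i_p}$ with antisymmetrically extended coefficients. Curvature: $R_{XY}=D_XD_Y-D_YD_X-D_{[X,Y]}$ for the Levi-Civita connection $D$, $R_{ijk\ell}=\langle R_{e_ie_j}e_k,e_\ell\rangle$, and the curvature operator $\mathfrak R$ on $2$-forms is the self-adjoint map $\mathfrak R(\omega^i\wedge\omega^j)=R_{ij\ell k}\,\omega^k\wedge\omega^\ell$; $\lambda_{\mathfrak R}(x)$ and $\Lambda_{\mathfrak R}(x)$ are its smallest and largest eigenvalues at $x$. For $i_1<\dots<i_p$, $\xi^g_{i_1\cdots i_p}:=\sum_{a=1}^p\sum_{i=1}^n g_{i_1\cdots(i)_a\cdots i_p}\,\omega^i\wedge\omega^{i_a}$, where $(i)_a$ means the index in the $a$-th slot is replaced by $i$. *)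

(* Defs.v *)
(* Pointwise (linear-algebraic) rendering of Lemma 7.4. *)
From HB Require Import structures.
From mathcomp Require Import all_boot all_order all_algebra all_fingroup.
Set Implicit Arguments. Unset Strict Implicit. Unset Printing Implicit Defensive.
Import Order.TTheory GRing.Theory Num.Theory.
Local Open Scope ring_scope.

(* Index pairs k < l : the orthonormal basis w^k /\ w^l (k<l) of 2-forms. *)
Definition pair2 (n : nat) := {kl : 'I_n * 'I_n | (kl.1 < kl.2)%N}.

Definition dim2 (n : nat) : nat := #|{: pair2 n}|.
Definition bidx (n : nat) (m : 'I_(dim2 n)) : pair2 n := enum_val m.

(* Algebraic curvature tensor R_{ijkl} (values at the point x in an
   orthonormal frame): the symmetries of the Riemann tensor. *)
Definition curvature_tensor (R : numDomainType) (n : nat)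
  (Rc : 'I_n -> 'I_n -> 'I_n -> 'I_n -> R) : Prop :=
  [/\ (forall i j k l, Rc i j k l = - Rc j i k l),
      (forall i j k l, Rc i j k l = - Rc i j l k),
      (forall i j k l, Rc i j k l = Rc k l i j) &
      (forall i j k l, Rc i j k l + Rc j k i l + Rc k i j l = 0)].

(* Matrix of the curvature operator in the basis w^k/\w^l (k<l), acting on
   row vectors (mathcomp's convention: v *m A).  Since
   R(w^i/\w^j) = sum_{k,l} R_{ijlk} w^k/\w^l, the coefficient on w^k/\w^l
   (k<l) is R_{ijlk} - R_{ijkl}. *)
Definition curvop (R : numDomainType) (n : nat)
  (Rc : 'I_n -> 'I_n -> 'I_n -> 'I_n -> R) : 'M[R]_(dim2 n) :=
  \matrix_(a, b)
    let: (i, j) := val (bidx a) in let: (k, l) := val (bidx b) in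
    Rc i j l k - Rc i j k l.

Definition dot2 (R : numDomainType) (n : nat) (u v : 'rV[R]_(dim2 n)) : R :=
  \sum_(m < dim2 n) u 0 m * v 0 m.

Definition mindex (p n : nat) := {ffun 'I_p -> 'I_n}.

Definition increasing (p n : nat) (I : mindex p n) : bool :=
  [forall a : 'I_p, forall b : 'I_p, (a < b)%N ==> (I a < I b)%N].

Definition repl (p n : nat) (I : mindex p n) (a : 'I_p) (i : 'I_n) : mindex p n :=
  [ffun b => if b == a then i else I b].

(* A p-form g at x: its antisymmetrically extended coefficient function. *)
Definition alternating (R : numDomainType) (p n : nat) (g : mindex p n -> R) : Prop :=
  forall (I : mindex p n) (a b : 'I_p), a != b ->
    g [ffun c => I (tperm a b c)] = - g I.

Definition formnorm2 (R : numDomainType) (p n : nat) (g : mindex p n -> R) : R :=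
  \sum_(I : mindex p n | increasing I) g I ^+ 2.

(* xi^g_I = sum_a sum_i g_{I[a:=i]} w^i /\ w^{i_a}; as a 2-form written
   sum_{i,j} c_{ij} w^i/\w^j with c_{ij} = sum_a [i_a = j] g_{I[a:=i]}, its
   coefficient on w^k/\w^l (k<l) is c_{kl} - c_{lk}. *)
Definition xi (R : numDomainType) (p n : nat) (g : mindex p n -> R)
  (I : mindex p n) : 'rV[R]_(dim2 n) :=
  \row_m let: (k, l) := val (bidx m) in
    \sum_(a < p) ((I a == l)%:R * g (repl I a k) - (I a == k)%:R * g (repl I a l)).

Definition curv_xi_sum (R : numDomainType) (p n : nat)
  (Rc : 'I_n -> 'I_n -> 'I_n -> 'I_n -> R) (g : mindex p n -> R) : R :=
  \sum_(I : mindex p n | increasing I) dot2 (xi g I *m curvop Rc) (xi g I).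

(* Main.v *)
Require Import Defs.
From HB Require Import structures.
From mathcomp Require Import all_boot all_order all_algebra all_fingroup.
Import Order.TTheory GRing.Theory Num.Theory.
Local Open Scope ring_scope.
From mathcomp Require Import complex lra.

Module SpecPart.
Import Num.Def.
Set Implicit Arguments. Unset Strict Implicit. Unset Printing Implicit Defensive.

Section Spec.
Variable R : rcfType.
Local Notation C := (R[i]).
Local Notation toC := (real_complex R).

Lemma conjC_toC (r : R) : conjC (toC r) = toC r.
Proof. apply: conj_Creal. by rewrite complex_real. Qed.

Lemma map_conj_toC m n (M : 'M[R]_(m,n)) : map_mx conjC (map_mx toC M) = map_mx toC M.
Proof. by apply/matrixP => i j; rewrite !mxE conjC_toC. Qed.


Local Open Scope sesquilinear_scope.

Lemma spec_core N (A : 'M[R]_N) : A^T = A -> forall x : 'rV[R]_N,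
 exists d w : 'I_N -> R, [/\ forall i, eigenvalue A (d i), forall i, 0 <= w i,
   \sum_i x 0 i ^+ 2 = \sum_i w i & \sum_i (x *m A) 0 i * x 0 i = \sum_i w i * d i].
Proof.
move=> tA x.
set AC := map_mx toC A.
have herm : AC \is hermsymmx.
  apply/is_hermitianmxP; rewrite expr0 scale1r.
  by rewrite /AC map_trmx tA map_conj_toC.
have /orthomx_spectralP eqA := hermitian_normalmx herm.
have Dreal := hermitian_spectral_diag_real herm.
move: eqA Dreal.
have Pu := spectral_unitarymx AC.
have Punit := spectral_unit AC.
set P := spectralmx AC; set D := spectral_diag AC => eqA Dreal.
have invP : invmx P = P ^t* by rewrite invmx_unitary.
have PtP : P ^t* *m P = 1%:M by rewrite -invP mulVmx.
have PPt : P *m P ^t* = 1%:M by apply/unitarymxP.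
have PA : P *m AC = diag_mx D *m P.
  by rewrite {1}eqA !mulmxA mulmxV // mul1mx.
pose d i := complex.Re (D 0 i).
have Di i : D 0 i = toC (d i).
  by rewrite /d RRe_real //; apply: (mxOverP Dreal).
exists d.
pose xC := map_mx toC x.
pose y := xC *m P ^t*.
pose w i := complex.Re (y 0 i * conjC (y 0 i)).
have wi i : y 0 i * conjC (y 0 i) = toC (w i).
  by rewrite /w RRe_real // ger0_real // mul_conjC_ge0.
exists w; split.
- move=> i.
  have : eigenvalue AC (D 0 i).
    apply/eigenvalueP; exists (row i P).
      by rewrite -row_mul PA row_mul row_diag_mx -scalemxAl -rowE.
    apply/negP => /eqP Hr.
    have := congr1 (row i) PPt.
    rewrite row_mul Hr mul0mx => /matrixP /(_ 0 i).
    by rewrite !mxE eqxx /= => /eqP; rewrite eq_sym oner_eq0.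
  rewrite eigenvalue_root_char /AC -map_char_poly Di fmorph_root.
  by rewrite -eigenvalue_root_char.
- move=> i; rewrite -lecR -wi; exact: mul_conjC_ge0.
- apply: complexI.
  have -> : toC (\sum_i x 0 i ^+ 2) = (xC *m xC ^t*) 0 0.
    rewrite rmorph_sum mxE; apply: eq_bigr => j _.
    by rewrite !mxE conjC_toC rmorphXn.
  have -> : xC *m xC ^t* = y *m y ^t*.
    by rewrite /y trmx_mul map_mxM trmxCK !mulmxA -(mulmxA xC) PtP mulmx1.
  rewrite rmorph_sum mxE; apply: eq_bigr => j _.
  transitivity (toC (w j)); last by []. rewrite -wi; by rewrite !mxE.
- apply: complexI.
  have -> : toC (\sum_i (x *m A) 0 i * x 0 i) = (xC *m AC *m xC ^t*) 0 0.
    rewrite rmorph_sum mxE; apply: eq_bigr => j _.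
    by rewrite /xC /AC -map_mxM !mxE conjC_toC rmorphM.
  have -> : xC *m AC *m xC ^t* = y *m diag_mx D *m y ^t*.
    rewrite /y trmx_mul map_mxM trmxCK {1}eqA invP !mulmxA.
    done.
  rewrite rmorph_sum mxE; apply: eq_bigr => j _.
  transitivity (toC (w j) * toC (d j)); last by rewrite rmorphM.
  rewrite -(wi j) -(Di j).
  rewrite mul_mx_diag !mxE.
  by rewrite mulrAC.
Qed.
End Spec.

End SpecPart.

Module CombPart.
Set Implicit Arguments. Unset Strict Implicit. Unset Printing Implicit Defensive.


Lemma card_lt_ord p (a : 'I_p) : #|[pred c : 'I_p | (c < a)%N]| = a.
Proof.
rewrite -sum1_card.
have le : (a <= p)%N by apply: ltnW.
rewrite (big_ord_narrow_cond (P := xpredT) le) /=.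
by rewrite sum1_card card_ord.
Qed.

Definition cmp p n (I : mindex p n) (s : {perm 'I_p}) : mindex p n := [ffun c => I (s c)].
Definition inj p n (I : mindex p n) := injectiveb (fun a => I a).

Section Sort.
Variables p n : nat.
Variable J : mindex p n.
Hypothesis Jinj : injective J.

Lemma rk_lt b : (#|[pred c | (J c < J b)%N]| < p)%N.
Proof.
rewrite -[p in (_ < p)%N]card_ord; apply: proper_card.
apply/properP; split; first by apply/subsetP.
by exists b; rewrite ?inE ?ltnn.
Qed.

Definition rk b : 'I_p := Ordinal (rk_lt b).

Lemma rk_mono x y : (J x < J y)%N -> (rk x < rk y)%N.
Proof.
move=> Jxy; apply: proper_card; apply/properP; split.
  apply/subsetP => c; rewrite !inE => H; exact: ltn_trans H Jxy.
by exists x; rewrite ?inE ?ltnn.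
Qed.

Lemma rk_monoV x y : (rk x < rk y)%N -> (J x < J y)%N.
Proof.
case: (ltngtP (J x) (J y)) => // H.
  by move=> /ltn_trans /(_ (rk_mono H)); rewrite ltnn.
have /Jinj -> : J x = J y by apply: val_inj.
by rewrite ltnn.
Qed.

Lemma rk_inj : injective rk.
Proof.
move=> x y E; case: (ltngtP (J x) (J y)) => H.
- by have := rk_mono H; rewrite E ltnn.
- by have := rk_mono H; rewrite E ltnn.
- by apply: Jinj; apply: val_inj.
Qed.

Definition s0 : {perm 'I_p} := (perm rk_inj)^-1.

Lemma s0_incr : increasing (cmp J s0).
Proof.
apply/forallP => a; apply/forallP => b; apply/implyP => ab.
rewrite !ffunE; apply: rk_monoV.
have E c : rk (s0 c) = c.
  have := permKV (perm rk_inj) c; rewrite permE; done.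
by rewrite !E.
Qed.

Lemma s0_uniq s : increasing (cmp J s) -> s = s0.
Proof.
move=> /forallP incr.
have inc (a b : 'I_p) : (a < b)%N -> (J (s a) < J (s b))%N.
  by move=> ab; have := implyP (forallP (incr a) b) ab; rewrite !ffunE.
have E a : rk (s a) = a.
  apply: val_inj => /=.
  rewrite -(card_lt_ord a).
  have -> : #|[pred c | (J c < J (s a))%N]| = #|[preim s of [pred c | (J c < J (s a))%N]]|.
    rewrite card_preim; last exact: perm_inj.
    apply: eq_card => c; rewrite !inE.
    by rewrite -[c](permKV s) codom_f.
  apply: eq_card => c; rewrite !inE.
  case: (ltngtP c a) => H.
  - by rewrite inc.
  - by apply/negbTE; rewrite -leqNgt ltnW // inc.
  - by rewrite (val_inj H) ltnn.
apply/permP => a; rewrite /s0.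
apply: (canRL (permK (perm rk_inj))).
by rewrite permE E.
Qed.
End Sort.

Section Comb.
Variable R : rcfType.
Variables p n : nat.
Variable g : mindex p n -> R.
Hypothesis galt : alternating g.


Lemma g_noninj (I : mindex p n) : ~~ inj I -> g I = 0.
Proof.
move=> /injectivePn [a [b ab Iab]].
have E : [ffun c => I (tperm a b c)] = I.
  apply/ffunP => c; rewrite ffunE; case: tpermP => // ->; by [].
have := galt I ab; rewrite E => H; lra.
Qed.

Lemma cmp1 (I : mindex p n) : cmp I 1 = I.
Proof. by apply/ffunP => c; rewrite ffunE perm1. Qed.

Lemma cmpM (I : mindex p n) (s t : {perm 'I_p}) : cmp I (s * t) = cmp (cmp I t) s.
Proof. by apply/ffunP => c; rewrite !ffunE permM. Qed.

Lemma g_perm2 (J : mindex p n) (s : {perm 'I_p}) : g (cmp J s) ^+ 2 = g J ^+ 2.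
Proof.
have [ts -> dts] := prod_tpermP s.
elim: ts J dts => [|[a b] ts IH] J /=; first by rewrite big_nil cmp1.
move=> /andP [ab dts]; rewrite big_cons cmpM.
have := galt (cmp J (\prod_(t <- ts) tperm t.1 t.2)) ab.
rewrite /cmp => ->. rewrite sqrrN. exact: IH.
Qed.


Lemma sortsum (F : mindex p n -> R) :
  (forall J, ~~ inj J -> F J = 0) -> (forall J s, F (cmp J s) = F J) ->
  \sum_J F J = p`!%:R * \sum_(J | increasing J) F J.
Proof.
move=> F0 Finv.
transitivity (\sum_J \sum_(s : 'S_p | increasing (cmp J s)) F J).
  apply: eq_bigr => J _.
  case: (boolP (inj J)) => [/injectiveP Ji | nJ]; last first.
    by rewrite F0 // big1.
  rewrite (big_pred1 (s0 Ji)) // => s /=.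
  apply/idP/eqP => [/(s0_uniq Ji) -> // | ->]; exact: s0_incr.
rewrite (exchange_big_dep xpredT) //=.
transitivity (\sum_(s : 'S_p) \sum_(J | increasing J) F J).
  apply: eq_bigr => s _.
  symmetry; rewrite (reindex (fun J => cmp J s)) /=.
    by apply: eq_bigr => J _; rewrite Finv.
  exists (fun K => cmp K s^-1) => K _.
    by rewrite -cmpM mulVg cmp1.
  by rewrite -cmpM mulgV cmp1.
rewrite sumr_const mulr_natl; congr (_ *+ _); exact: card_Sn.
Qed.

Definition fresh (I : mindex p n) (k : 'I_n) := [forall b, I b != k].

Definition E (I : mindex p n) : R :=
  \sum_(a < p) \sum_(k | fresh I k) g (repl I a k) ^+ 2.

Lemma E_inv (I : mindex p n) (s : {perm 'I_p}) : E (cmp I s) = E I.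
Proof.
rewrite /E [RHS](reindex_inj (@perm_inj _ s)) /=.
apply: eq_bigr => a _.
have fr k : fresh (cmp I s) k = fresh I k.
  apply/forallP/forallP => H b.
    by have := H ((s^-1)%g b); rewrite ffunE permKV.
  by rewrite ffunE.
apply: eq_big => [k | k _]; first exact: fr.
have -> : repl (cmp I s) a k = cmp (repl I (s a) k) s.
  apply/ffunP => c; rewrite !ffunE (inj_eq (@perm_inj _ s)).
  by case: (c == a).
exact: g_perm2.
Qed.

Lemma repl_repl (J : mindex p n) a m : repl (repl J a m) a (J a) = J.
Proof. by apply/ffunP => c; rewrite !ffunE; case: eqP => // ->. Qed.

Lemma repl_at (J : mindex p n) a m : repl J a m a = m.
Proof. by rewrite ffunE eqxx. Qed.

Lemma P_phi (J : mindex p n) a m : inj J -> fresh J m ->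
  inj (repl J a m) && fresh (repl J a m) (J a).
Proof.
move=> /injectiveP Ji /forallP Jm; apply/andP; split.
  apply/injectiveP => c d; rewrite !ffunE.
  case: (eqVneq c a) => [->|ca]; case: (eqVneq d a) => [->|da] //.
  - by move=> E1; have := Jm d; rewrite E1 eqxx.
  - by move=> E1; have := Jm c; rewrite E1 eqxx.
  - exact: Ji.
apply/forallP => b; rewrite ffunE.
case: (eqVneq b a) => [_|ba]; first by rewrite eq_sym Jm.
by apply/negP => /eqP /Ji /eqP; rewrite (negbTE ba).
Qed.

Lemma card_fresh (J : mindex p n) : inj J -> #|[pred k | fresh J k]| = (n - p)%N.
Proof.
move=> /injectiveP Ji.
have := cardC [pred k | k \in codom (fun a => J a)].
have -> : #|[pred k | k \in codom (fun a => J a)]| = #|codom (fun a => J a)|.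
  by apply: eq_card.
rewrite (card_codom Ji) !card_ord => H.
have -> : #|[pred k | fresh J k]| = #|[predC [pred k | k \in codom (fun a => J a)]]|.
  apply: eq_card => k; rewrite !inE.
  apply/forallP/idP => [H1 | H1 b].
    by apply/codomP => -[b Eb]; have := H1 b; rewrite Eb eqxx.
  by apply/eqP => Eb; move/negP: H1; apply; rewrite -Eb codom_f.
by rewrite -[in RHS]H addKn.
Qed.

Lemma double_count :
  \sum_(I | inj I) E I = (p * (n - p))%:R * \sum_J g J ^+ 2.
Proof.
rewrite /E exchange_big /=.

transitivity (\sum_(a < p) ((n - p)%:R * \sum_J g J ^+ 2)); last first.
  by rewrite sumr_const card_ord -mulrnAl mulnC natrM mulr_natr.
apply: eq_bigr => a _.
rewrite (pair_big_dep (fun I => inj I) (fun I k => fresh I k)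
  (fun I k => g (repl I a k) ^+ 2)) /=.
pose phi (x : mindex p n * 'I_n) := (repl x.1 a x.2, x.1 a).
have phiK : involutive phi.
  by move=> [J m]; rewrite /phi /= repl_repl repl_at.
rewrite (reindex phi) /=; last by exists phi => x _; apply: phiK.
rewrite (eq_bigl (fun x => inj x.1 && fresh x.1 x.2)); last first.
  move=> [J m] /=; apply/idP/idP => /andP [H1 H2].
    by have := P_phi a H1 H2; rewrite repl_repl repl_at.
  exact: P_phi.
rewrite (eq_bigr (fun x => g x.1 ^+ 2)); last first.
  by move=> [J m] _ /=; rewrite repl_repl.
rewrite -(pair_big_dep (fun J => inj J) (fun J k => fresh J k) (fun J k => g J ^+ 2)) /=.
rewrite mulr_sumr [RHS](bigID (fun J => inj J)) /=.
rewrite [X in _ = _ + X]big1 ?addr0; last first.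
  by move=> J /g_noninj ->; rewrite expr0n mulr0.
apply: eq_bigr => J HJ.
by rewrite sumr_const card_fresh // mulr_natl.
Qed.

Lemma repl_noninj (I : mindex p n) a b k : a != b -> I b = k -> ~~ inj (repl I a k).
Proof.
move=> ab Ib; apply/injectiveP => H.
have := H a b; rewrite !ffunE eqxx eq_sym (negbTE ab) Ib => /(_ erefl) /eqP.
by rewrite (negbTE ab).
Qed.

Section XiNorm.
Variable I : mindex p n.
Hypothesis Iinj : inj I.

Definition cc (k l : 'I_n) := \sum_(a < p) (I a == l)%:R * g (repl I a k).

Lemma cc_cross k l : k != l -> cc k l * cc l k = 0.
Proof.
move=> kl; case: (boolP (fresh I k)) => fk.
  rewrite [cc l k]big1 ?mulr0 // => a _.
  by have := forallP fk a => /negbTE ->; rewrite mul0r.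
have [b /negPn /eqP Ib] : exists b, ~~ (I b != k).
  by apply/existsP; move: fk; rewrite /fresh negb_forall.
rewrite [cc k l]big1 ?mul0r // => a _.
case: (eqVneq (I a) l) => [Ial|]; last by rewrite mulr0n mul0r.
rewrite g_noninj ?mulr0 //; apply: (repl_noninj (b := b)) => //.
by apply/eqP => ab; move: kl; rewrite -Ib -ab Ial eqxx.
Qed.

Lemma cc_sq k l : cc k l ^+ 2 = \sum_(a < p) (I a == l)%:R * g (repl I a k) ^+ 2.
Proof.
rewrite expr2 /cc mulr_suml; apply: eq_bigr => a _.
rewrite mulr_sumr (bigD1 a) //= big1 ?addr0.
  by case: (I a == l); rewrite ?mul1r ?mul0r ?expr2 ?mulr0.
move=> b ba.
case: (eqVneq (I a) l) => [Ial|]; last by rewrite /= mulr0n !mul0r.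
case: (eqVneq (I b) l) => [Ibl|]; last by rewrite /= mulr0n mul0r !mulr0.
move/injectiveP: Iinj => /(_ b a); rewrite Ial Ibl => /(_ erefl) /eqP.
by rewrite (negbTE ba).
Qed.

Lemma xinorm : \sum_(m < dim2 n) (xi g I) 0 m ^+ 2 = E I.
Proof.
pose F (x : 'I_n * 'I_n) := (cc x.1 x.2 - cc x.2 x.1) ^+ 2.
transitivity (\sum_(x : pair2 n) F (val x)).
  rewrite [RHS](eq_bigl (fun x => x \in {: pair2 n})) // [RHS]big_enum_val; apply: eq_bigr => x _.
  rewrite mxE /F /bidx; case: (val (enum_val x)) => k l /=.
  by rewrite -sumrB.
transitivity (\sum_(kl : 'I_n * 'I_n | (kl.1 < kl.2)%N) F kl).
  symmetry; rewrite (reindex_omap (val : pair2 n -> _) insub); last first.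
    by move=> kl H; rewrite insubT.
  by apply: eq_bigl => -[kl H] /=; rewrite insubT H /= eqxx.
transitivity (\sum_(kl : 'I_n * 'I_n | (kl.1 < kl.2)%N) (cc kl.1 kl.2 ^+ 2 + cc kl.2 kl.1 ^+ 2)).
  apply: eq_bigr => kl H; rewrite /F sqrrB cc_cross ?mul0rn ?subr0 //.
  by apply/eqP => E1; move: H; rewrite E1 ltnn.
rewrite big_split /=.
rewrite [X in _ + X = _](reindex_inj (h := fun kl : 'I_n * 'I_n => (kl.2, kl.1))); last first.
  by move=> [a b] [c d] /= [-> ->].
rewrite /=.
transitivity (\sum_(kl : 'I_n * 'I_n | kl.1 != kl.2) cc kl.1 kl.2 ^+ 2).
  rewrite [RHS](bigID (fun kl : 'I_n * 'I_n => (kl.1 < kl.2)%N)) /=.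
  congr (_ + _); apply: eq_bigl => -[k l] /=.
    by rewrite -(inj_eq val_inj) /=; case: ltngtP.
  by rewrite -(inj_eq val_inj) /=; case: ltngtP.
transitivity (\sum_(kl : 'I_n * 'I_n | kl.1 != kl.2)
   \sum_(a < p) (I a == kl.2)%:R * g (repl I a kl.1) ^+ 2).
  by apply: eq_bigr => kl _; rewrite cc_sq.
rewrite exchange_big /E; apply: eq_bigr => a _.
pose G k := g (repl I a k) ^+ 2.
transitivity (\sum_k \sum_(l | k != l) (I a == l)%:R * G k).
  by rewrite pair_big_dep; apply: eq_bigl => -[k l].
rewrite [RHS]big_mkcond; apply: eq_bigr => k _.
rewrite -big_distrl /=.
case: (eqVneq k (I a)) => [kIa | kIa].
  rewrite big1 ?mul0r; last first.
    by move=> l; rewrite kIa eq_sym => /negbTE ->.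
  case: (boolP (fresh I k)) => // fk.
  by have := forallP fk a; rewrite kIa eqxx.
rewrite (bigD1 (I a)) //= big1 ?addr0 ?eqxx ?mul1r; last first.
  by move=> l /andP [_ /negbTE]; rewrite eq_sym => ->.
case: (boolP (fresh I k)) => // fk.
have [b /negPn /eqP Ib] : exists b, ~~ (I b != k).
  by apply/existsP; move: fk; rewrite /fresh negb_forall.
rewrite /G g_noninj ?expr0n //; apply: (repl_noninj (b := b)) => //.
by apply/eqP => ab; move: kIa; rewrite -Ib ab eqxx.
Qed.
End XiNorm.

End Comb.

End CombPart.

Module Final.
Set Implicit Arguments. Unset Strict Implicit. Unset Printing Implicit Defensive.
Import SpecPart CombPart.

Lemma rayleigh_lo (R : rcfType) N (A : 'M[R]_N) lam : A^T = A ->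
  (forall mu, eigenvalue A mu -> lam <= mu) -> forall x : 'rV[R]_N,
  lam * \sum_i x 0 i ^+ 2 <= \sum_i (x *m A) 0 i * x 0 i.
Proof.
move=> tA Hl x; have [d [w [Hd Hw -> ->]]] := spec_core tA x.
rewrite mulr_sumr; apply: ler_sum => i _.
by rewrite mulrC ler_wpM2l // Hl.
Qed.

Lemma rayleigh_hi (R : rcfType) N (A : 'M[R]_N) Lam : A^T = A ->
  (forall mu, eigenvalue A mu -> mu <= Lam) -> forall x : 'rV[R]_N,
  \sum_i (x *m A) 0 i * x 0 i <= Lam * \sum_i x 0 i ^+ 2.
Proof.
move=> tA Hl x; have [d [w [Hd Hw -> ->]]] := spec_core tA x.
rewrite mulr_sumr; apply: ler_sum => i _.
by rewrite [Lam * _]mulrC ler_wpM2l // Hl.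
Qed.

Lemma curvop_sym (R : numDomainType) n (Rc : 'I_n -> 'I_n -> 'I_n -> 'I_n -> R) :
  curvature_tensor Rc -> (curvop Rc)^T = curvop Rc.
Proof.
move=> [H1 H2 H3 H4]; apply/matrixP => a b; rewrite !mxE.
case: (val (bidx a)) => i j; case: (val (bidx b)) => k l.
rewrite (H3 k l j i) (H3 k l i j) (H1 j i k l) (H2 i j l k).
by [].
Qed.

Lemma incr_inj p n (I : mindex p n) : increasing I -> inj I.
Proof.
move=> /forallP H; apply/injectiveP => a b E1.
case: (ltngtP a b) => ab.
- by have := implyP (forallP (H a) b) ab; rewrite E1 ltnn.
- by have := implyP (forallP (H b) a) ab; rewrite E1 ltnn.
- exact: val_inj.
Qed.

Lemma inj_cmp p n (I : mindex p n) s : inj (cmp I s) = inj I.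
Proof.
apply/injectiveP/injectiveP => H a b.
  move=> E1; have := H (s^-1 a)%g (s^-1 b)%g; rewrite !ffunE !permKV => /(_ E1).
  exact: (can_inj (permKV s)).
by rewrite !ffunE => /H /perm_inj.
Qed.

Lemma xi_sum (R : rcfType) p n (g : mindex p n -> R) : alternating g ->
  \sum_(I | increasing I) \sum_(m < dim2 n) (xi g I) 0 m ^+ 2
  = (p * (n - p))%:R * formnorm2 g.
Proof.
move=> galt.
have fact0 : (p`!%:R : R) != 0 by rewrite pnatr_eq0 -lt0n fact_gt0.
apply: (mulfI fact0).
transitivity (\sum_(I : mindex p n) (if inj I then E g I else 0)).
  rewrite sortsum; last 2 first.
  - by move=> J /negbTE ->.
  - by move=> J s; rewrite inj_cmp E_inv.
  congr (_ * _); apply: eq_bigr => I HI.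
  by rewrite incr_inj // xinorm // incr_inj.
rewrite -big_mkcond /= double_count // /formnorm2.
rewrite (sortsum (F := fun J => g J ^+ 2)) //.
- by rewrite mulrCA.
- by move=> J /(g_noninj galt) ->; rewrite expr0n.
- by move=> J s; rewrite g_perm2.
Qed.

End Final.
Import Final.

Theorem lemma7p4 (R : rcfType) (n p : nat)
  (Rc : 'I_n -> 'I_n -> 'I_n -> 'I_n -> R) (lam Lam : R)
  (g : mindex p n -> R) :
  (1 <= p)%N -> (p <= n)%N ->
  curvature_tensor Rc ->
  eigenvalue (curvop Rc) lam ->
  (forall mu, eigenvalue (curvop Rc) mu -> lam <= mu) ->
  eigenvalue (curvop Rc) Lam ->
  (forall mu, eigenvalue (curvop Rc) mu -> mu <= Lam) ->
  alternating g ->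
  (p * (n - p))%:R * lam * formnorm2 g <= curv_xi_sum Rc g /\
  curv_xi_sum Rc g <= (p * (n - p))%:R * Lam * formnorm2 g.
Proof.
move=> _ _ Hc _ Hlo _ Hhi galt.
have tA := curvop_sym Hc.
rewrite /curv_xi_sum /dot2; split.
  rewrite mulrAC -(xi_sum galt) mulrC mulr_sumr; apply: ler_sum => I _.
  exact: rayleigh_lo.
rewrite mulrAC -(xi_sum galt) mulr_suml; apply: ler_sum => I _.
rewrite mulrC; exact: rayleigh_hi.
Qed.
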